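(* There is a function $\delta$ with $\delta(n)\to 0$ as $n\to\infty$ such that for every positive integer $n$ for which a regular Hadamard matrix of order $n$ exists, there exists a real orthogonal $(n+1)\times(n+1)$ matrix $M=(m_{i,j})$ with $(1-\delta(n))\frac{1}{\sqrt{n+1}}\le |m_{i,j}|\le (1+\delta(n))\frac{1}{\sqrt{n+1}}$ for all $i,j$ (i.e. all entries have modulus $(1+o(1))\frac{1}{\sqrt{n+1}}$).
   Context: A Hadamard matrix of order $n$ is an $n\times n$ matrix with entries in $\{+1,-1\}$ whose rows are pairwise orthogonal. It is called regular if all its row sums and all its column sums are equal (to one common value). *)

(* Defs.v *)
From HB Require Import structures.
From mathcomp Require Import all_boot all_order all_algebra.
From mathcomp Require Import all_classical all_reals all_analysis.
Set Implicit Arguments. Unset Strict Implicit. Unset Printing Implicit Defensive.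
Import Order.TTheory GRing.Theory Num.Theory.
Local Open Scope ring_scope.

Definition is_hadamard (n : nat) (H : 'M[int]_n) : Prop :=
  (forall i j, H i j = 1 \/ H i j = -1) /\
  (forall i k, i != k -> \sum_(j < n) H i j * H k j = 0).

Definition is_regular (n : nat) (H : 'M[int]_n) : Prop :=
  exists c : int,
    (forall i, \sum_(j < n) H i j = c) /\ (forall j, \sum_(i < n) H i j = c).

Definition regular_hadamard_exists (n : nat) : Prop :=
  exists H : 'M[int]_n, is_hadamard H /\ is_regular H.

Definition orthogonal_mx (R : realType) (m : nat) (M : 'M[R]_m) : Prop :=
  M *m M^T = 1%:M.

(* Main.v *)
Set Warnings "-all".
Require Import Defs.
From HB Require Import structures.
From mathcomp Require Import all_boot all_order all_algebra.
From mathcomp Require Import all_classical all_reals all_analysis.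
From mathcomp Require Import ring lra.
Import Order.TTheory GRing.Theory Num.Theory.
Local Open Scope classical_set_scope.
Local Open Scope ring_scope.

Section H.
Variables (R : realType) (n : nat) (H : 'M[int]_n) (c : int).
Hypothesis hH : is_hadamard H.
Hypothesis hrow : forall i, \sum_(j < n) H i j = c.
Hypothesis hcol : forall j, \sum_(i < n) H i j = c.
Let h i j : R := (H i j)%:~R.

Lemma h_pm i j : h i j = 1 \/ h i j = -1.
Proof. by rewrite /h; case: (hH.1 i j) => ->; [left|right]; rewrite ?rmorphN /=. Qed.

Lemma h_norm i j : `|h i j| = 1.
Proof. by case: (h_pm i j) => ->; rewrite ?normrN normr1. Qed.

Lemma h_row i : \sum_j h i j = c%:~R.
Proof. by rewrite /h -(hrow i) rmorph_sum. Qed.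

Lemma h_col j : \sum_i h i j = c%:~R.
Proof. by rewrite /h -(hcol j) rmorph_sum. Qed.

Lemma h_dot i k : \sum_j h i j * h k j = (i == k)%:R * n%:R.
Proof.
case: eqVneq => [<-|ne].
  rewrite mul1r (eq_bigr (fun _ => 1)) ?sumr_const ?card_ord //.
  by move=> j _; case: (h_pm i j) => ->; rewrite ?mulrNN mulr1.
have E := congr1 (fun z : int => (z%:~R : R)) (hH.2 i k ne).
rewrite /= rmorph_sum /= mulr0z in E.
rewrite mul0r -[in RHS]E; apply: eq_bigr => j _; by rewrite /h intrM.
Qed.

Lemma c_sq : (0 < n)%N -> (c%:~R : R) ^+ 2 = n%:R.
Proof.
move=> n0.
have E1 : \sum_i \sum_k \sum_j h i j * h k j = (n%:R : R) * n%:R.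
  under eq_bigr => i _ do under eq_bigr => k _ do rewrite h_dot.
  rewrite (eq_bigr (fun _ => n%:R)) ?sumr_const ?card_ord ?mulr_natl //.
  move=> i _; rewrite (bigD1 i) //= eqxx mul1r big1 ?addr0 //.
  by move=> k; rewrite eq_sym => /negbTE ->; rewrite mul0r.
have E2 : \sum_i \sum_k \sum_j h i j * h k j = (n%:R : R) * (c%:~R) ^+ 2.
  under eq_bigr => i _ do rewrite exchange_big /=.
  rewrite exchange_big /=.
  under eq_bigr => j _ do under eq_bigr => i _ do rewrite -mulr_sumr h_col.
  under eq_bigr => j _ do rewrite -mulr_suml h_col.
  by rewrite sumr_const card_ord mulr_natl expr2.
apply: (@mulfI _ (n%:R : R)); first by rewrite pnatr_eq0 -lt0n.
by rewrite -E2 E1.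
Qed.
Lemma sum_lin (f : 'I_n -> R) a b : \sum_j (f j * a + b) = (\sum_j f j) * a + b *+ n.
Proof. by rewrite big_split /= -mulr_suml sumr_const card_ord. Qed.

Lemma sum_quad (x y : 'I_n -> R) a b :
  \sum_j (x j * a + b) * (y j * a + b) =
  (\sum_j x j * y j) * a ^+ 2 + b * a * ((\sum_j x j) + \sum_j y j) + b ^+ 2 *+ n.
Proof.
have E j : (x j * a + b) * (y j * a + b) = x j * y j * a ^+ 2 + (b * a * x j + b * a * y j) + b ^+ 2 by ring.
under eq_bigr => j _ do rewrite E.
rewrite big_split big_split /= big_split /= -mulr_suml -!mulr_sumr sumr_const card_ord.
by rewrite mulrDr mulrnAr.
Qed.
End H.

Lemma alg_diag (R : realType) (n : nat) (r b C : R) : (n%:R : R) != 0 -> C != 0 ->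
  r ^+ 2 * (n%:R + 1) = 1 ->
  r * r + (b * n%:R / n%:R + (- (1 - r) / n%:R) / C * (C + C) + (- (1 - r) / n%:R) ^+ 2 *+ n) = b.
Proof.
move=> hN hC hr; rewrite -mulr_natr; apply/eqP; rewrite -subr_eq0.
rewrite (_ : _ - _ = (r ^+ 2 * (n%:R + 1) - 1) / n%:R); last by field; rewrite ?hN ?hC.
by rewrite hr subrr mul0r.
Qed.



Lemma lo (R : realType) (w r : R) : 0 < w -> w <= 1 -> 0 < r -> r <= w -> w <= r * (1 + w) ->
  (1 - 3 * w) * r <= w - w ^+ 2.
Proof. move=> *. nra. Qed.
Lemma hi (R : realType) (w r : R) : 0 < w -> w <= 1 -> 0 < r -> r <= w -> w <= r * (1 + w) ->
  w + w ^+ 2 <= (1 + 3 * w) * r.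
Proof. move=> *. nra. Qed.
Lemma facts (R : realType) (q m : R) : 0 < q -> 1 <= m -> q ^+ 2 = m ^+ 2 + 1 ->
  [/\ 0 < m^-1, m^-1 <= 1, 0 < q^-1, q^-1 <= m^-1 & m^-1 <= q^-1 * (1 + m^-1)].
Proof.
move=> q0 m1 hq.
have m0 : 0 < m by lra.
have hmq : m <= q by nra.
have hqm : q <= m + 1 by nra.
have w0 : 0 < m^-1 by rewrite invr_gt0.
have r0 : 0 < q^-1 by rewrite invr_gt0.
have e1 : m * m^-1 = 1 by rewrite mulfV // gt_eqF.
have e2 : q * q^-1 = 1 by rewrite mulfV // gt_eqF.
split => //.
- nra.
- have : 0 < m^-1 * q^-1 by rewrite mulr_gt0.
  nra.
- have : 0 < m^-1 * q^-1 by rewrite mulr_gt0.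
  nra.
Qed.

Lemma delta_cvg (R : realType) :
  let delta := (fun n : nat => 3 * Num.sqrt ((n%:R : R)^-1)) in delta @ \oo --> 0.
Proof.
move=> delta.
have H : [sequence delta n.+1]_n @ \oo --> 0.
  rewrite /delta /=.
  have -> : (0:R) = 3 * Num.sqrt 0 by rewrite sqrtr0 mulr0.
  apply: cvgMl_tmp.
  apply: (cvg_comp _ _ (@cvg_harmonic R)).
  exact: sqrt_continuous.
have E := @cvg_shiftS R^o delta (nbhs (0:R^o)). exact: (eq_rect _ (fun P : Prop => P) H _ E).
Qed.

Theorem proposition3p5 (R : realType) :
  exists delta : nat -> R,
    delta @ \oo --> 0 /\
    forall n : nat, (0 < n)%N -> regular_hadamard_exists n ->
      exists M : 'M[R]_(n.+1),
        orthogonal_mx M /\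
        forall i j,
          (1 - delta n) / Num.sqrt (n.+1)%:R <= `|M i j| /\
          `|M i j| <= (1 + delta n) / Num.sqrt (n.+1)%:R.
Proof.
exists (fun n : nat => 3 * Num.sqrt ((n%:R : R)^-1)); split; first exact: delta_cvg.
move=> n n0 [H [hH [c [hrow hcol]]]].
pose h i j : R := (H i j)%:~R.
pose N : R := n%:R. pose cR : R := c%:~R.
pose q : R := Num.sqrt (n.+1)%:R. pose r := q^-1.
pose t := - (1 - r) / N.
pose M := \matrix_(i < n.+1, j < n.+1)
  match unlift ord0 i, unlift ord0 j with
  | None, None => - r | None, Some _ => r | Some _, None => r
  | Some i', Some j' => h i' j' / cR + t end.
exists M.
have hN : N != 0 by rewrite pnatr_eq0 -lt0n.
have hc2 : cR ^+ 2 = N by exact: (@c_sq R n H c hH hcol n0).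
have hc0 : cR != 0 by apply/eqP => c0; move: hN; rewrite -hc2 c0 expr0n eqxx.
have hq2 : q ^+ 2 = N + 1 by rewrite sqr_sqrtr // /N -natr1.
have hq0 : q != 0 by rewrite /q sqrtr_eq0 -ltNge ltr0n.
have hr : r ^+ 2 * (N + 1) = 1 by rewrite -hq2 exprVn mulVf // expf_neq0.
split.
{ apply/matrixP => i k; rewrite !mxE.
under eq_bigr => j _ do rewrite !mxE.
rewrite big_ord_recl unlift_none.
under eq_bigr => j _ do rewrite liftK.
case: unliftP => [i'|] ->; case: unliftP => [k'|] -> /=.
  - rewrite (inj_eq lift_inj) sum_quad (@h_dot R n H hH) (@h_row R n H c hrow) (@h_row R n H c hrow).
    rewrite exprVn hc2.
    exact: alg_diag.
  - rewrite -mulr_suml sum_lin (@h_row R n H c hrow) -mulr_natr /t; field; apply/andP; split; [exact: hN | exact: hc0].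
  - rewrite -mulr_sumr sum_lin (@h_row R n H c hrow) -mulr_natr /t; field; apply/andP; split; [exact: hN | exact: hc0].
  - rewrite mulrNN sumr_const card_ord -mulr_natr -{1}[r*r]mulr1 -mulrDr -expr2 addrC.
    exact: hr. }
move=> i j.
pose m := Num.sqrt N.
have hm2 : m ^+ 2 = N by rewrite sqr_sqrtr // ler0n.
have hm1 : 1 <= m.
  have : 1 <= N by rewrite ler1n.
  have : 0 <= m by rewrite sqrtr_ge0.
  nra.
have hq0' : 0 < q by rewrite sqrtr_gt0 ltr0n.
have hqm : q ^+ 2 = m ^+ 2 + 1 by rewrite hq2 hm2.
have [w0 w1 r0 rw wr] := @facts R _ _ hq0' hm1 hqm.
rewrite sqrtrV ?ler0n // -/N -/m -/q.
rewrite -/r.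
have hcm : `|cR| = m by rewrite -sqrtr_sqr hc2.
have key : forall x, x = r -> (1 - 3 * m^-1) * r <= `|x| /\ `|x| <= (1 + 3 * m^-1) * r.
  move=> x ->; rewrite /r ger0_norm; last exact: ltW.
  split; nra.
rewrite /M !mxE.
case: (unliftP ord0 i) => [i'|] _; case: (unliftP ord0 j) => [j'|] _ /=.
- have ht : `|t| <= m^-1 ^+ 2.
    have h1r : 0 <= 1 - r by rewrite /r; lra.
    rewrite exprVn hm2 /t normrM normrN (ger0_norm h1r) normfV (ger0_norm (ler0n _ n)).
    rewrite -[leRHS]mul1r ler_wpM2r ?invr_ge0 ?ler0n //; rewrite /r; lra.
  have hx : `|h i' j' / cR| = m^-1 by rewrite normrM normfV hcm (@h_norm R n H hH) mul1r.
  have e1 : m^-1 - m^-1 ^+ 2 <= `|h i' j' / cR + t|.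
    apply: (le_trans _ (lerB_normD _ _)); rewrite hx; lra.
  have e2 : `|h i' j' / cR + t| <= m^-1 + m^-1 ^+ 2.
    apply: (le_trans (ler_normD _ _)); rewrite hx; lra.
  split.
  + apply: (le_trans _ e1); exact: lo.
  + apply: (le_trans e2); exact: hi.
- exact: key.
- exact: key.
- by rewrite normrN; apply: key.
Qed.
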